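(* For every message $M$ and formula $\phi$: $\vdash\neg\langle M\rangle\phi\leftrightarrow\neg[M]\phi$.
   Context: Fix a finite set $\mathcal{A}$ of agent names containing a distinguished name $\mathsf{CM}$. Messages: $M ::= a \mid B \mid (M,M)$ ($a\in\mathcal{A}$, $B$ optional data constants, pairs). $\mathcal{P}$ is a denumerable set of propositional variables containing atoms $\mathsf{k}_a(M)$ (''$a$ knows $M$''). Formulas: $\phi ::= P \mid \phi\wedge\phi \mid \phi\vee\phi \mid \neg\phi \mid \phi\to\phi \mid [M]\phi$. Abbreviations: $\mathrm{true}:=\mathsf{k}_{\mathsf{CM}}(\mathsf{CM})$, $\mathrm{false}:=\neg\mathrm{true}$, $\phi\leftrightarrow\psi:=(\phi\to\psi)\wedge(\psi\to\phi)$, $\langle M\rangle\phi:=\neg\neg(\mathsf{k}_{\mathsf{CM}}(M)\wedge\phi)$. LIiP is the smallest set of formulas containing all instances of: the axioms of an adequate Hilbert axiomatization of intuitionistic propositional logic; $\mathsf{k}_a(a)$; $(\mathsf{k}_a(M)\wedge\mathsf{k}_a(M'))\leftrightarrow\mathsf{k}_a((M,M'))$; $[M]\mathsf{k}_{\mathsf{CM}}(M)$; $[M](\phi\to\psi)\to([M]\phi\to[M]\psi)$; $[M]\phi\to(\mathsf{k}_{\mathsf{CM}}(M)\to\phi)$; $[M]\phi\to\langle M\rangle\phi$; $\phi\to[M]\phi$; and closed under modus ponens and the rule: if $\mathsf{k}_{\mathsf{CM}}(M)\to\mathsf{k}_{\mathsf{CM}}(M')$ is in the set then so is $[M']\phi\to[M]\phi$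 for every $\phi$. Write $\vdash\phi$ for $\phi\in\mathrm{LIiP}$. *)

(* Defs.v *)
From mathcomp Require Import all_boot.
Set Implicit Arguments.

Section LIiP.
Variables (Agent : finType) (CM : Agent) (Data : Type).

Inductive msg : Type :=
| MAgent : Agent -> msg
| MData : Data -> msg
| MPair : msg -> msg -> msg.

Inductive form : Type :=
| PVar : nat -> form
| Pk : Agent -> msg -> form
| FAnd : form -> form -> form
| FOr : form -> form -> form
| FNot : form -> form
| FImp : form -> form -> form
| FBox : msg -> form -> form.

Definition ftrue : form := Pk CM (MAgent CM).
Definition ffalse : form := FNot ftrue.
Definition FIff (p q : form) : form := FAnd (FImp p q) (FImp q p).
Definition FDia (M : msg) (p : form) : form :=
  FNot (FNot (FAnd (Pk CM M) p)).

(* LIiP: smallest set containing the axioms, closed under MP and the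
   monotonicity rule.  IPC part: a standard adequate Hilbert system
   (Kleene's axiomatization with primitive negation). *)
Inductive LIiP : form -> Prop :=
| ax_K p q : LIiP (FImp p (FImp q p))
| ax_S p q r : LIiP (FImp (FImp p (FImp q r)) (FImp (FImp p q) (FImp p r)))
| ax_AndI p q : LIiP (FImp p (FImp q (FAnd p q)))
| ax_AndE1 p q : LIiP (FImp (FAnd p q) p)
| ax_AndE2 p q : LIiP (FImp (FAnd p q) q)
| ax_OrI1 p q : LIiP (FImp p (FOr p q))
| ax_OrI2 p q : LIiP (FImp q (FOr p q))
| ax_OrE p q r :
    LIiP (FImp (FImp p r) (FImp (FImp q r) (FImp (FOr p q) r)))
| ax_NotI p q : LIiP (FImp (FImp p q) (FImp (FImp p (FNot q)) (FNot p)))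
| ax_NotE p q : LIiP (FImp p (FImp (FNot p) q))
| ax_kself a : LIiP (Pk a (MAgent a))
| ax_kpair a M M' :
    LIiP (FIff (FAnd (Pk a M) (Pk a M')) (Pk a (MPair M M')))
| ax_boxk M : LIiP (FBox M (Pk CM M))
| ax_boxK M p q : LIiP (FImp (FBox M (FImp p q)) (FImp (FBox M p) (FBox M q)))
| ax_boxT M p : LIiP (FImp (FBox M p) (FImp (Pk CM M) p))
| ax_boxDia M p : LIiP (FImp (FBox M p) (FDia M p))
| ax_boxIntro M p : LIiP (FImp p (FBox M p))
| r_MP p q : LIiP (FImp p q) -> LIiP p -> LIiP q
| r_mono M M' p :
    LIiP (FImp (Pk CM M) (Pk CM M')) -> LIiP (FImp (FBox M' p) (FBox M p)).

End LIiP.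

(* Main.v *)
Require Import Defs.
From mathcomp Require Import all_boot.
From Stdlib Require Import List.

Section D.
Variables (Agent : finType) (CM : Agent) (Data : Type).
Notation F := (form Agent Data).

Inductive Der (G : list F) : F -> Prop :=
| d_hyp p : In p G -> Der G p
| d_thm p : LIiP CM p -> Der G p
| d_mp p q : Der G (FImp p q) -> Der G p -> Der G q.

Lemma thm_I (p : F) : LIiP CM (FImp p p).
Proof.
eapply r_MP. eapply r_MP. apply (ax_S _ p (FImp p p) p).
apply ax_K. apply ax_K.
Qed.

Lemma deduction G (A B : F) : Der (A :: G) B -> Der G (FImp A B).
Proof.
induction 1 as [p Hin|p Hp|p q _ IH1 _ IH2].
- destruct Hin as [<-|Hin].
  + apply d_thm, thm_I.
  + eapply d_mp. apply d_thm, ax_K. by apply d_hyp.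
- eapply d_mp. apply d_thm, ax_K. by apply d_thm.
- eapply d_mp. eapply d_mp. apply d_thm, (ax_S _ A p q). exact IH1. exact IH2.
Qed.

Lemma der_nil (p : F) : Der nil p -> LIiP CM p.
Proof.
induction 1 as [p Hin|p Hp|p q _ IH1 _ IH2]; [destruct Hin|exact Hp|].
eapply r_MP; eauto.
Qed.

Lemma mp2 G (p q : F) : Der G (FImp p q) -> Der G p -> Der G q.
Proof. apply d_mp. Qed.

End D.

Theorem theorem2p14 (Agent : finType) (CM : Agent) (Data : Type)
  (M : msg Agent Data) (phi : form Agent Data) :
  LIiP CM (FIff (FNot (FDia CM M phi)) (FNot (FBox M phi))).
Proof.
apply der_nil.
set q := FAnd (Pk CM M) phi.
set D := FDia CM M phi.
set B := FBox M phi.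
have H1 : @Der _ CM _ nil (FImp (FNot D) (FNot B)).
{ apply deduction.
  eapply d_mp. eapply d_mp. apply d_thm, (ax_NotI _ B D).
  apply d_thm, ax_boxDia.
  apply deduction. apply d_hyp. simpl; auto. }
have H2 : @Der _ CM _ nil (FImp (FNot B) (FNot D)).
{ apply deduction.
  eapply d_mp. eapply d_mp. apply d_thm, (ax_NotI _ D (FNot q)).
  - apply deduction.
    eapply d_mp. eapply d_mp. apply d_thm, (ax_NotI _ q B).
    + apply deduction.
      eapply d_mp. apply d_thm, ax_boxIntro.
      eapply d_mp. apply d_thm, (ax_AndE2 _ (Pk CM M) phi).
      apply d_hyp. simpl; auto.
    + apply deduction. apply d_hyp. simpl; auto.
  - apply d_thm, thm_I. }
unfold FIff.
eapply d_mp. eapply d_mp. apply d_thm, ax_AndI. exact H1. exact H2.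
Qed.
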